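(* Let $q=2^m$ and let $f\in\mathbb{F}_q[x]$ define a function $f:\mathbb{F}_q\to\mathbb{F}_q$. Let $X$ be the algebraic set of points $(x,y,z,t)$ in the affine space $\mathbb{A}^4(\overline{\mathbb{F}}_q)$ such that $P_f(x,y,z)=P_f(x,y,t)=0$, and let $V\subset\mathbb{A}^4(\overline{\mathbb{F}}_q)$ be the hypersurface defined by $$(x+y)(x+z)(x+t)(y+z)(y+t)(z+t)(x+y+z+t)=0.$$ Then $\delta(f)\le 4$ if and only if $X(\mathbb{F}_q)\subset V$, where $X(\mathbb{F}_q)$ denotes the set of $\mathbb{F}_q$-rational points of $X$.
   Context: The differential uniformity of $f:\mathbb{F}_q\to\mathbb{F}_q$ is $\delta(f)=\max_{\alpha\neq0,\beta\in\mathbb{F}_q}\#\{x\in\mathbb{F}_q : f(x+\alpha)+f(x)=\beta\}$. For a polynomial $f$, the polynomial $f(x)+f(y)+f(z)+f(x+y+z)$ is divisible by $(x+y)(x+z)(y+z)$, and $P_f(x,y,z)$ denotes the quotient polynomial $\frac{f(x)+f(y)+f(z)+f(x+y+z)}{(x+y)(x+z)(y+z)}$. *)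

(* Defs.v *)
From HB Require Import structures.
From mathcomp Require Import all_boot all_order all_algebra all_field.
From mathcomp Require Import mpoly.
Set Implicit Arguments. Unset Strict Implicit. Unset Printing Implicit Defensive.
Import GRing.Theory.
Local Open Scope ring_scope.

Definition i0 : 'I_3 := @Ordinal 3 0 isT.
Definition i1 : 'I_3 := @Ordinal 3 1 isT.
Definition i2 : 'I_3 := @Ordinal 3 2 isT.

Definition pcomp3 (F : fieldType) (f : {poly F}) (p : {mpoly F[3]}) : {mpoly F[3]} :=
  (map_poly (@mpolyC 3 F) f).[p].

Definition Pf_num (F : fieldType) (f : {poly F}) : {mpoly F[3]} :=
  pcomp3 f 'X_i0 + pcomp3 f 'X_i1 + pcomp3 f 'X_i2
  + pcomp3 f ('X_i0 + 'X_i1 + 'X_i2).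

Definition Pf_den (F : fieldType) : {mpoly F[3]} :=
  ('X_i0 + 'X_i1) * ('X_i0 + 'X_i2) * ('X_i1 + 'X_i2).

Definition eval3 (F : fieldType) (p : {mpoly F[3]}) (x y z : F) : F :=
  p.@[fun i : 'I_3 => [:: x; y; z]`_i].

Definition diff_unif (F : finFieldType) (f : {poly F}) : nat :=
  \max_(a : F | a != 0) \max_(b : F) #|[set x : F | (f.[x + a] + f.[x] == b)%R]|.

(* Main.v *)
Require Import Defs.
From HB Require Import structures.
From mathcomp Require Import all_boot all_order all_algebra all_field.
From mathcomp Require Import mpoly.
From mathcomp Require Import ring zify.
Import GRing.Theory.
Local Open Scope ring_scope.

Lemma meval_pcomp3 (F : fieldType) (f : {poly F}) (p : {mpoly F[3]}) v :
  (pcomp3 f p).@[v] = f.[p.@[v]].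
Proof.
rewrite /pcomp3 -horner_map; congr horner.
rewrite -map_poly_comp; apply: map_poly_id => c _ /=; exact: mevalC.
Qed.

Lemma key_eval (F : fieldType) (f : {poly F}) (P : {mpoly F[3]})
  (hP : P * Pf_den F = Pf_num f) x y z :
  eval3 P x y z * ((x + y) * (x + z) * (y + z))
  = f.[x] + f.[y] + f.[z] + f.[x + y + z].
Proof.
have := congr1 (fun p => p.@[fun i : 'I_3 => [:: x; y; z]`_i]) hP.
rewrite /= mevalM /Pf_den /Pf_num !mevalM !mevalD !meval_pcomp3 !mevalD !mevalXU.
by rewrite /i0 /i1 /i2 /=.
Qed.

Lemma cardD1_ge {T : finType} (A : {set T}) w : (#|A| <= (#|A :\ w|).+1)%N.
Proof. by rewrite (cardsD1 w A); case: (w \in A). Qed.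

Lemma card_step {T : finType} (A : {set T}) w1 w2 k :
  (k.+2 <= #|A|)%N -> (k <= #|A :\ w1 :\ w2|)%N.
Proof.
move=> h; have g1 := cardD1_ge A w1; have g2 := cardD1_ge (A :\ w1) w2; lia.
Qed.

Theorem theorem2p2 (m : nat) (F : finFieldType) (hF : #|F| = (2 ^ m)%N)
  (f : {poly F}) (P : {mpoly F[3]}) (hP : P * Pf_den F = Pf_num f) :
  (diff_unif f <= 4)%N <->
  (forall x y z t : F, eval3 P x y z = 0 -> eval3 P x y t = 0 ->
     (x + y) * (x + z) * (x + t) * (y + z) * (y + t) * (z + t) * (x + y + z + t) = 0).
Proof.
have h2 : (2%:R : F) = 0 by apply: pcharf0; exact: (card_finPcharP hF).
have neqE : forall u v s : F, s != 0 -> u + v = s -> u != v.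
  move=> u v s hs e; apply: contraNneq hs => E.
  by rewrite -e E; apply/eqP; ring: h2.
have nzE : forall u v s : F, u != v -> s = u + v -> s != 0.
  move=> u v s hs ->; apply: contraNneq hs => E.
  have -> : u = u + v + v by ring: h2.
  by rewrite E add0r.
split.
- move=> hd x y z t hz ht.
  case: (eqVneq ((x + y) * (x + z) * (x + t) * (y + z) * (y + t) * (z + t) * (x + y + z + t)) 0) => // hne.
  exfalso.
  move: hne; rewrite !mulf_eq0 !negb_or.
  move=> /andP[/andP[/andP[/andP[/andP[/andP[nxy nxz] nxt] nyz] nyt] nzt] ns].
  have n1 : f.[x] + f.[y] + f.[z] + f.[x + y + z] = 0 :> F by rewrite -(@key_eval _ _ _ hP) hz mul0r.
  have n2 : f.[x] + f.[y] + f.[t] + f.[x + y + t] = 0 :> F by rewrite -(@key_eval _ _ _ hP) ht mul0r.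
  pose a := x + y.
  pose b := f.[x + a] + f.[x].
  pose S := [set w : F | f.[w + a] + f.[w] == b].
  have hS : (#|S| <= diff_unif f)%N.
    rewrite /diff_unif.
    have H1 := leq_bigmax_cond (P := fun a0 : F => a0 != 0) (F := fun a0 : F => \max_(b0 : F) #|[set w : F | (f.[w + a0] + f.[w] == b0)%R]|) (x + y) nxy.
    apply: (leq_trans _ H1).
    rewrite /S /a; exact: leq_bigmax.
  pose s := [:: x; y; z; x + y + z; t; x + y + t].
  have us : uniq s.
  { rewrite /s /= !inE !negb_or; repeat (apply/andP; split).
    all: try first [ apply: (neqE _ _ _ nxy); ring: h2
          | apply: (neqE _ _ _ nxz); ring: h2
          | apply: (neqE _ _ _ nxt); ring: h2
          | apply: (neqE _ _ _ nyz); ring: h2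
          | apply: (neqE _ _ _ nyt); ring: h2
          | apply: (neqE _ _ _ nzt); ring: h2
          | apply: (neqE _ _ _ ns); ring: h2 ].
    all: by []. }
  have sub : {subset s <= S}.
    have xa : x + a = y by rewrite /a; ring: h2.
    have ya : y + a = x by rewrite /a; ring: h2.
    move=> w; rewrite /s /S !inE /b xa => /or4P[/eqP->|/eqP->|/eqP->|/or3P[/eqP->|/eqP->|/eqP->]].
    + by rewrite xa.
    + by rewrite ya addrC.
    + have -> : z + a = x + y + z by rewrite /a; ring.
      have e : f.[x + y + z] + f.[z] = f.[y] + f.[x] by rewrite -[f.[x + y + z] + f.[z]]addr0 -n1; ring: h2.
      by rewrite e.
    + have -> : x + y + z + a = z by rewrite /a; ring: h2.
      have e : f.[z] + f.[x + y + z] = f.[y] + f.[x] by rewrite -[f.[z] + f.[x + y + z]]addr0 -n1; ring: h2.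
      by rewrite e.
    + have -> : t + a = x + y + t by rewrite /a; ring.
      have e : f.[x + y + t] + f.[t] = f.[y] + f.[x] by rewrite -[f.[x + y + t] + f.[t]]addr0 -n2; ring: h2.
      by rewrite e.
    + have -> : x + y + t + a = t by rewrite /a; ring: h2.
      have e : f.[t] + f.[x + y + t] = f.[y] + f.[x] by rewrite -[f.[t] + f.[x + y + t]]addr0 -n2; ring: h2.
      by rewrite e.
  have : (6 <= #|S|)%N.
    have <- : size s = 6%N by [].
    rewrite -(card_uniqP us); apply: subset_leq_card; apply/subsetP; exact: sub.
  by move=> h6; have := leq_trans h6 (leq_trans hS hd).
- move=> H.
  apply/bigmax_leqP => a ha; apply/bigmax_leqP => b _.
  rewrite leqNgt; apply/negP => h5.
  set S := [set w : F | f.[w + a] + f.[w] == b] in h5.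
  have : (0 < #|S|)%N by apply: leq_ltn_trans h5.
  case/card_gt0P => x xS.
  set S1 := S :\ x :\ (x + a).
  have c1 : (3 <= #|S1|)%N.
    exact: card_step h5.
  have : (0 < #|S1|)%N by apply: leq_trans c1.
  case/card_gt0P => u; rewrite !inE => /and3P[ua ux uS].
  set S2 := S1 :\ u :\ (u + a).
  have c2 : (1 <= #|S2|)%N.
    exact: card_step c1.
  case/card_gt0P: c2 => v; rewrite !inE => /and5P[vua vu vxa vx vS].
  move: xS uS vS; rewrite !inE => /eqP xS /eqP uS /eqP vS.
  have hz : forall w, w != x -> w != x + a -> f.[w + a] + f.[w] = b ->
      eval3 P x (x + a) w = 0.
    move=> w wx wxa wS.
    have e := @key_eval _ _ _ hP x (x + a) w.
    have d0 : (x + (x + a)) * (x + w) * (x + a + w) != 0.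
      apply: mulf_neq0; [apply: mulf_neq0|].
      + by rewrite (_ : x + (x + a) = a) //; ring: h2.
      + by apply: (nzE x w) => //; rewrite eq_sym.
      + by apply: (nzE (x + a) w) => //; rewrite eq_sym.
    have n0 : f.[x] + f.[x + a] + f.[w] + f.[x + (x + a) + w] = 0.
      have -> : x + (x + a) + w = w + a by ring: h2.
      have -> : f.[x] + f.[x + a] + f.[w] + f.[w + a] = (f.[x + a] + f.[x]) + (f.[w + a] + f.[w]) by ring.
      rewrite xS wS; ring: h2.
    move: e; rewrite n0 => /eqP; rewrite mulf_eq0 (negbTE d0) orbF => /eqP //.
  have := H x (x + a) u v (hz u ux ua uS) (hz v vx vxa vS).
  apply/eqP.
  repeat apply: mulf_neq0.
  + by rewrite (_ : x + (x + a) = a) //; ring: h2.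
  + by apply: (nzE x u) => //; rewrite eq_sym.
  + by apply: (nzE x v) => //; rewrite eq_sym.
  + by apply: (nzE (x + a) u) => //; rewrite eq_sym.
  + by apply: (nzE (x + a) v) => //; rewrite eq_sym.
  + by apply: (nzE u v) => //; rewrite eq_sym.
  + by apply: (nzE (u + a) v) => //; [rewrite eq_sym | ring: h2].
Qed.
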